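(* Let $s$ be a positive integer and $r$ a nonnegative integer. Then \[ \sum_{D \in \mathcal{D}_{s,s}^{(r)}} q^{\mathrm{vmr}(D)} = q^{\binom{r+1}{2}}\begin{bmatrix}2s-1\\ s+r\end{bmatrix}_q. \]
   Context: A ballot path from $(0,0)$ to $(s+t,s-t)$ is a sequence of lattice points $v_0=(0,0),v_1,\ldots,v_{s+t}=(s+t,s-t)$ with each step $v_i-v_{i-1}\in\{(1,1),(1,-1)\}$ that never goes below the $x$-axis (for $s=t$ these are Dyck paths from $(0,0)$ to $(2s,0)$). A point $v_i$ ($0<i<s+t$) is a valley if $v_i-v_{i-1}=(1,-1)$ and $v_{i+1}-v_i=(1,1)$; a valley lying on the $x$-axis is a return. Each return may independently be marked or not; a marked path is a path together with a choice of which of its returns are marked. $\mathcal{D}_{s,t}^{(r)}$ is the set of marked ballot paths from $(0,0)$ to $(s+t,s-t)$ with at least $r$ marked returns. For such $D$, $\mathrm{maj}(D)$ is the sum of the $x$-coordinates of all valleys of $D$, and $\mathrm{vmr}(D)=\mathrm{maj}(D)-\frac12\sum x_i$, where the last sum runs over the $x$-coordinates $x_i$ of the marked returns of $D$. Notation: $(a;q)_n=(1-a)\cdots(1-aq^{n-1})$ and $\begin{bmatrix}n\\k\end{bmatrix}_q=\frac{(q;q)_n}{(q;q)_k(q;q)_{n-k}}$ for $n\ge k\ge0$, $0$ otherwise. *)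

(* Defs.v *)
From HB Require Import structures.
From mathcomp Require Import all_boot all_order all_algebra fraction.
Set Implicit Arguments. Unset Strict Implicit. Unset Printing Implicit Defensive.
Import Order.TTheory GRing.Theory Num.Theory.
Local Open Scope ring_scope.

(* A lattice path is encoded by its sequence of steps: true = (1,1), false = (1,-1).
   The point v_i is (i, height p i). *)
Definition height (p : seq bool) (i : nat) : int :=
  (count id (take i p))%:Z - (count negb (take i p))%:Z.

Definition ballot (s t : nat) (p : seq bool) : bool :=
  [&& size p == (s + t)%N, count id p == s &
      [forall i : 'I_(size p).+1, 0 <= height p i]].

Definition valley (p : seq bool) (i : nat) : bool :=
  [&& (0 < i)%N, (i < size p)%N, ~~ nth false p i.-1 & nth false p i].

Definition is_return (p : seq bool) (i : nat) : bool :=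
  valley p i && (height p i == 0).

Definition returns (n : nat) (p : n.-tuple bool) : {set 'I_n} :=
  [set i : 'I_n | is_return p i].

Definition maj (p : seq bool) : nat :=
  (\sum_(i < size p | valley p i) i)%N.

(* vmr(D) = maj(D) - (1/2) sum of x-coordinates of marked returns.  Returns lie on
   the x-axis, hence have even x-coordinate, so (1/2) x = x./2 exactly. *)
Definition vmr (n : nat) (p : n.-tuple bool) (M : {set 'I_n}) : int :=
  (maj p)%:Z - (\sum_(i in M) (nat_of_ord i)./2)%N%:Z.

(* q as the indeterminate in the field of rational functions Q(q) ~ Frac(Z[q]) *)
Definition qX : {fraction {poly int}} := tofrac 'X.

Definition qpoch (a : {fraction {poly int}}) (n : nat) : {fraction {poly int}} :=
  \prod_(i < n) (1 - a * qX ^+ i).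

Definition qbinom (n k : nat) : {fraction {poly int}} :=
  if (k <= n)%N then qpoch qX n / (qpoch qX k * qpoch qX (n - k)) else 0.

(* Main.v *)
Require Import Defs.
From HB Require Import structures.
From mathcomp Require Import all_boot all_order all_algebra fraction.
From mathcomp Require Import ring lra zify.
Import Order.TTheory GRing.Theory Num.Theory.
Local Open Scope ring_scope.

Notation FF := {fraction {poly int}}.

Lemma qX_neq0 : qX != 0.
Proof. by rewrite /qX tofrac_eq0 polyX_eq0. Qed.

Lemma qXn_neq1 n : (0 < n)%N -> 1 - qX ^+ n != 0.
Proof.
move=> n0.
have -> : 1 - qX ^+ n = tofrac (1 - 'X^n : {poly int}).
  by rewrite /qX tofracB tofracXn tofrac1.
rewrite tofrac_eq0 -oppr_eq0 opprB.
have := monicXnsubC (1 : int) n0; rewrite polyC1 => /monic_neq0 //.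
Qed.

Lemma qpochS n : qpoch qX n.+1 = qpoch qX n * (1 - qX ^+ n.+1).
Proof. by rewrite /qpoch big_ord_recr /= exprS. Qed.

Lemma qpoch0 : qpoch qX 0 = 1.
Proof. by rewrite /qpoch big_ord0. Qed.

Lemma qpoch_neq0 n : qpoch qX n != 0.
Proof.
elim: n => [|n IH]; first by rewrite qpoch0; apply: oner_neq0.
rewrite qpochS; apply: mulf_neq0; first exact: IH.
exact: qXn_neq1.
Qed.

Lemma qbinomE a b : qbinom (a + b) a = qpoch qX (a + b) / (qpoch qX a * qpoch qX b).
Proof. by rewrite /qbinom leq_addr addKn. Qed.

Lemma qbinom_gt n k : (n < k)%N -> qbinom n k = 0.
Proof. by rewrite /qbinom ltnNge => /negbTE ->. Qed.

Lemma qbinom_nn n : qbinom n n = 1.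
Proof.
have := qbinomE n 0; rewrite addn0 => ->.
rewrite qpoch0 mulr1 divff //; exact: qpoch_neq0.
Qed.

Lemma qbinom_n0 n : qbinom n 0 = 1.
Proof.
have := qbinomE 0 n; rewrite add0n => ->.
rewrite qpoch0 mul1r divff //; exact: qpoch_neq0.
Qed.

Lemma qbinom_sym n k : (k <= n)%N -> qbinom n k = qbinom n (n - k).
Proof.
move=> kn; rewrite /qbinom kn leq_subr subKn //; congr (_ / _); exact: mulrC.
Qed.

Lemma field_pascal1 (F : fieldType) (P Pa Pb x y : F) : Pa != 0 -> Pb != 0 -> 1 - x != 0 -> 1 - y != 0 ->
  P * (1 - x * y) / (Pa * (1 - x) * (Pb * (1 - y))) =
  P / (Pa * (1 - x) * Pb) + y * (P / (Pa * (Pb * (1 - y)))).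
Proof. by move=> *; field; apply/and4P; split. Qed.

Lemma field_pascal2 (F : fieldType) (P Pa Pb x y : F) : Pa != 0 -> Pb != 0 -> 1 - x != 0 -> 1 - y != 0 ->
  P * (1 - x * y) / (Pa * (1 - x) * (Pb * (1 - y))) =
  P / (Pa * (Pb * (1 - y))) + x * (P / (Pa * (1 - x) * Pb)).
Proof. by move=> *; field; apply/and4P; split. Qed.

Lemma pascal_gen k b :
  qbinom (k + b).+2 k.+1 = qbinom (k + b).+1 k.+1 + qX ^+ b.+1 * qbinom (k + b).+1 k /\
  qbinom (k + b).+2 k.+1 = qbinom (k + b).+1 k + qX ^+ k.+1 * qbinom (k + b).+1 k.+1.
Proof.
have e1 : ((k + b).+2 = k.+1 + b.+1)%N by rewrite addSn addnS.
have e2 : ((k + b).+1 = k.+1 + b)%N by rewrite addSn.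
have e3 : ((k + b).+1 = k + b.+1)%N by rewrite addnS.
have h1 := qpoch_neq0 k; have h2 := qpoch_neq0 b.
have h3 := @qXn_neq1 k.+1 (ltn0Sn k); have h4 := @qXn_neq1 b.+1 (ltn0Sn b).
have A : qbinom (k+b).+2 k.+1 = qpoch qX (k+b).+1 * (1 - qX^+(k.+1) * qX^+(b.+1)) /
    (qpoch qX k * (1-qX^+k.+1) * (qpoch qX b * (1 - qX^+b.+1))).
  rewrite {1}e1 qbinomE -e1 (qpochS (k+b).+1) (qpochS k) (qpochS b) -exprD -e1. done.
have B : qbinom (k+b).+1 k.+1 = qpoch qX (k+b).+1 / (qpoch qX k * (1 - qX^+k.+1) * qpoch qX b).
  rewrite {1}e2 qbinomE -e2 (qpochS k). done.
have C : qbinom (k+b).+1 k = qpoch qX (k+b).+1 / (qpoch qX k * (qpoch qX b * (1 - qX^+b.+1))).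
  rewrite {1}e3 qbinomE -e3 (qpochS b). done.
rewrite A B C.
split. exact: (@field_pascal1 FF _ _ _ (qX ^+ k.+1) (qX ^+ b.+1) h1 h2 h3 h4). exact: (@field_pascal2 FF _ _ _ (qX ^+ k.+1) (qX ^+ b.+1) h1 h2 h3 h4).
Qed.

Lemma pascal1 n k : qbinom n.+1 k.+1 = qbinom n k.+1 + qX ^+ (n - k) * qbinom n k.
Proof.
case: (ltngtP k n) => [kn|nk|->].
- have [b ->] : exists b, n = (k + b.+1)%N by exists (n - k.+1)%N; rewrite addnS -addSn subnKC.
  rewrite addnS (pascal_gen k b).1 -addnS; congr (_ + _ * _).
  by rewrite addKn.
- rewrite !qbinom_gt ?mulr0 ?addr0 //; exact: ltnW.
- by rewrite subnn expr0 mul1r !qbinom_nn qbinom_gt ?add0r.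
Qed.

Lemma pascal2 n k : qbinom n.+1 k.+1 = qbinom n k + qX ^+ k.+1 * qbinom n k.+1.
Proof.
case: (ltngtP k n) => [kn|nk|->].
- have [b ->] : exists b, n = (k + b.+1)%N by exists (n - k.+1)%N; rewrite addnS -addSn subnKC.
  by rewrite addnS (pascal_gen k b).2 -addnS.
- rewrite !qbinom_gt ?mulr0 ?addr0 //; exact: ltnW.
- by rewrite !qbinom_nn (@qbinom_gt n n.+1 (ltnSn n)) mulr0 addr0.
Qed.

Lemma field_absorb (F : fieldType) (P Pa Pb y z : F) : Pa != 0 -> Pb != 0 -> 1 - y != 0 ->
  (1 - y) * (P * (1 - z) / (Pa * (Pb * (1 - y)))) = (1 - z) * (P / (Pa * Pb)).
Proof. by move=> *; field; apply/and3P; split. Qed.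

Lemma absorb m j : (1 - qX ^+ (m.+1 - j)) * qbinom m.+1 j = (1 - qX ^+ m.+1) * qbinom m j.
Proof.
case: (ltngtP j m.+1) => [jm|mj|->].
- have [b ->] : exists b, m = (j + b)%N by exists (m - j)%N; rewrite subnKC.
  have e1 : ((j + b).+1 = j + b.+1)%N by rewrite addnS.
  have h1 := qpoch_neq0 j; have h2 := qpoch_neq0 b.
  have h4 := @qXn_neq1 b.+1 (ltn0Sn b).
  have A : qbinom (j + b).+1 j = qpoch qX (j + b) * (1 - qX ^+ (j + b).+1) /
      (qpoch qX j * (qpoch qX b * (1 - qX ^+ b.+1))).
    by rewrite {1}e1 qbinomE -e1 (qpochS (j + b)) (qpochS b).
  rewrite A qbinomE e1 addKn -e1.
  exact: (@field_absorb FF _ _ _ (qX ^+ b.+1) (qX ^+ (j + b).+1) h1 h2 h4).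
- rewrite !qbinom_gt ?mulr0 //; exact: ltnW.
- by rewrite subnn expr0 subrr mul0r qbinom_gt ?mulr0.
Qed.

Definition wt (i : nat) : FF := (qX ^+ i./2)^-1.
Definition rets (p : seq bool) : seq nat := [seq i <- iota 0 (size p) | is_return p i].
Fixpoint esg (l : seq FF) (r : nat) : FF :=
  match l with
  | [::] => (r == 0)%N%:R
  | x :: l' => esg l' r + x * esg l' r.-1
  end.
Definition Wt (r : nat) (p : seq bool) : FF := qX ^+ maj p * esg (map wt (rets p)) r.
Fixpoint allseqs (n : nat) : seq (seq bool) :=
  if n is n'.+1 then [seq rcons p b | p <- allseqs n', b <- [:: true; false]] else [:: [::]].
Definition endsD (p : seq bool) := (0 < size p)%N && ~~ nth false p (size p).-1.

Lemma ring_esg (R : comNzRingType) (a b c x y : R) :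
  a + x * b + y * (b + x * c) = a + y * b + x * (b + y * c).
Proof. ring. Qed.

Lemma esg_rcons l x r : esg (rcons l x) r = esg l r + x * esg l r.-1.
Proof.
elim: l r => [|y l IH] r //=.
rewrite !IH; exact: ring_esg.
Qed.

Lemma take_rcons_le (p : seq bool) b i : (i <= size p)%N -> take i (rcons p b) = take i p.
Proof. by move=> h; rewrite -cats1 takel_cat. Qed.

Lemma height_rcons p b i : (i <= size p)%N -> height (rcons p b) i = height p i.
Proof. by move=> h; rewrite /height take_rcons_le. Qed.

Lemma height_last p b :
  height (rcons p b) (size p).+1 = height p (size p) + (if b then 1 else -1).
Proof.
rewrite /height take_oversize ?size_rcons // take_size -cats1 !count_cat /=.
case: b => /=; rewrite ?addn0 ?add0n; lia.
Qed.

Lemma valley_rcons p b i : (i < size p)%N -> valley (rcons p b) i = valley p i.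
Proof.
move=> h; rewrite /valley size_rcons !nth_rcons h ltnS (ltnW h).
by case: i h => [|i] h //=; rewrite (ltnW h).
Qed.

Lemma valley_last p b : valley (rcons p b) (size p) = b && endsD p.
Proof.
rewrite /valley /endsD size_rcons ltnSn !nth_rcons ltnn eqxx /=.
case: (size p) => [|k] /=; first by rewrite andbF.
by rewrite leqnn andbC.
Qed.

Lemma is_return_rcons p b i : (i < size p)%N -> is_return (rcons p b) i = is_return p i.
Proof. by move=> h; rewrite /is_return valley_rcons // height_rcons // ltnW. Qed.

Lemma maj_rcons p b : maj (rcons p b) = (maj p + (if b && endsD p then size p else 0))%N.
Proof.
rewrite /maj size_rcons big_mkcond big_ord_recr /= valley_last.
congr (_ + _)%N; rewrite [in RHS]big_mkcond; apply: eq_bigr => i _.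
by rewrite valley_rcons.
Qed.

Lemma rets_rcons p b : rets (rcons p b) =
  rets p ++ (if b && endsD p && (height p (size p) == 0) then [:: size p] else [::]).
Proof.
rewrite /rets size_rcons -addn1 iotaD add0n /= filter_cat /=.
rewrite /is_return valley_last height_rcons //.
congr (_ ++ _); apply: eq_in_filter => i; rewrite mem_iota add0n => /andP[_ h].
exact: is_return_rcons.
Qed.

Definition nonneg (p : seq bool) := all (fun i => 0 <= height p i) (iota 0 (size p).+1).

Lemma forall_ord_all m (P : nat -> bool) : [forall i : 'I_m, P i] = all P (iota 0 m).
Proof.
apply/forallP/allP => [H x|H i]; last by apply: H; rewrite mem_iota ltn_ord.
by rewrite mem_iota add0n => /andP[_ xm]; exact: (H (Ordinal xm)).
Qed.

Lemma ballotE s t p : ballot s t p = [&& size p == (s + t)%N, count id p == s & nonneg p].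
Proof. by rewrite /ballot (forall_ord_all _ (fun i => 0 <= height p i)). Qed.

Lemma nonneg_last p : nonneg p -> 0 <= height p (size p).
Proof. by move/allP => H; apply: H; rewrite mem_iota add0n ltnSn. Qed.

Arguments nonneg_last {p}.

Lemma nonneg_rcons p b : nonneg (rcons p b) =
  nonneg p && (0 <= height p (size p) + (if b then 1 else -1)).
Proof.
rewrite /nonneg size_rcons -addn1 iotaD all_cat add0n.
congr (_ && _); last by rewrite /= andbT height_last.
apply: eq_in_all => i; rewrite mem_iota add0n ltnS => /andP[_ h].
by rewrite height_rcons.
Qed.

Lemma height_size p : height p (size p) = (count id p)%:Z - (size p - count id p)%:Z.
Proof.
rewrite /height take_size; congr (_ - _%:Z).
by rewrite -(count_predC id p); rewrite addKn.
Qed.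

Lemma count_le p : (count id p <= size p)%N.
Proof. exact: count_size. Qed.

Lemma ballot_height s t p : ballot s t p -> height p (size p) = s%:Z - t%:Z.
Proof.
rewrite ballotE height_size => /and3P[/eqP -> /eqP -> _].
by rewrite addKn.
Qed.

Arguments ballot_height {s t p}.

Lemma ballot_le s t p : ballot s t p -> (t <= s)%N.
Proof.
move=> h; have := ballot_height h; move: h; rewrite ballotE => /and3P[_ _ /nonneg_last].
move=> h1 h2; rewrite h2 in h1; lia.
Qed.

Arguments ballot_le {s t p}.

Lemma ballot_rcons_true s t p : ballot s t (rcons p true) = (0 < s)%N && ballot s.-1 t p.
Proof.
rewrite !ballotE nonneg_rcons size_rcons -cats1 count_cat /= !addn0.
case: s => [|s] /=; first by rewrite addn1 /= andbF.
rewrite addn1 addSn !eqSS.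
case: (boolP (nonneg p)) => hn; rewrite ?andbF //= andbT.
by rewrite (le_trans (nonneg_last hn)) ?andbT // lerDl.
Qed.

Lemma ballot_rcons_false s t p :
  ballot s t (rcons p false) = [&& (0 < t)%N, (t <= s)%N & ballot s t.-1 p].
Proof.
apply/idP/idP.
- move=> h; have hts := ballot_le h; move: h.
  rewrite !ballotE nonneg_rcons size_rcons -cats1 count_cat /= !addn0 => /and3P[/eqP hs /eqP hc /andP[hn hh]].
  have hl := count_le p.
  case: t hts hs => [|t] hts hs; first by lia.
  rewrite /= hts hn hc eqxx andbT; apply/eqP; lia.
- case/and3P => ht hts; rewrite !ballotE nonneg_rcons size_rcons -cats1 count_cat /= !addn0.
  case/and3P => /eqP hs /eqP hc hn.
  rewrite hc eqxx hn /= height_size hs hc.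
  apply/andP; split; first by apply/eqP; lia.
  case: t ht hts hs => [|t] // _ hts hs /=.
  have -> : ((s + t - s)%N = t) by rewrite addKn.
  rewrite -lerBlDr; lia.
Qed.

Lemma mem_allseqs n p : (p \in allseqs n) = (size p == n).
Proof.
elim: n p => [|n IH] p.
  by rewrite /= inE size_eq0.
change ((p \in [seq rcons q b | q <- allseqs n, b <- [:: true; false]]) = (size p == n.+1)).
apply/allpairsP/idP => [[[q b] [/= hq _ ->]]|].
  by rewrite size_rcons eqSS -IH.
case/lastP: p => [|q x] //; rewrite size_rcons eqSS -IH => hq.
by exists (q, x); split => //; case: x.
Qed.

Lemma uniq_allseqs n : uniq (allseqs n).
Proof.
elim: n => [|n IH] //.
change (uniq [seq rcons q b | q <- allseqs n, b <- [:: true; false]]).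
apply: allpairs_uniq => //.
by move=> [q1 b1] [q2 b2] _ _ /= /rcons_inj.
Qed.

Lemma sum_allseqsS (P : pred (seq bool)) (F : seq bool -> FF) n :
  \sum_(p <- allseqs n.+1 | P p) F p =
  \sum_(p <- allseqs n) ((if P (rcons p true) then F (rcons p true) else 0) +
                         (if P (rcons p false) then F (rcons p false) else 0)).
Proof.
have -> : allseqs n.+1 = [seq rcons q b | q <- allseqs n, b <- [:: true; false]] by [].
rewrite big_mkcond big_allpairs_dep /=; apply: eq_bigr => p _.
by rewrite !big_cons big_nil addr0.
Qed.

Lemma endsD_rcons p b : endsD (rcons p b) = ~~ b.
Proof. by rewrite /endsD size_rcons /= nth_rcons ltnn eqxx. Qed.

Lemma Wt_false r p : Wt r (rcons p false) = Wt r p.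
Proof. by rewrite /Wt maj_rcons rets_rcons /= addn0 cats0. Qed.

Lemma Wt_true_noD r p : ~~ endsD p -> Wt r (rcons p true) = Wt r p.
Proof.
by move/negbTE => h; rewrite /Wt maj_rcons rets_rcons /= h /= addn0 cats0.
Qed.

Lemma ring_Wt (R : comNzRingType) (a x e e' w : R) :
  a * x * (e + w * e') = x * (a * e + w * (a * e')).
Proof. ring. Qed.

Lemma Wt_true_D r p : endsD p -> Wt r (rcons p true) =
  qX ^+ size p * (if height p (size p) == 0 then Wt r p + wt (size p) * Wt r.-1 p else Wt r p).
Proof.
move=> h; rewrite /Wt maj_rcons rets_rcons /= h /= exprD.
case: (height p (size p) == 0) => /=.
  rewrite map_cat /= cats1 esg_rcons; exact: ring_Wt.
by rewrite cats0 (mulrC (qX ^+ maj p)) -mulrA.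
Qed.

Definition T n s t r := \sum_(p <- allseqs n | ballot s t p) Wt r p.
Definition TD n s t r := \sum_(p <- allseqs n | ballot s t p && endsD p) Wt r p.
Definition TU n s t r := \sum_(p <- allseqs n | ballot s t p && ~~ endsD p) Wt r p.

Lemma T_split n s t r : T n s t r = TU n s t r + TD n s t r.
Proof. by rewrite /T (bigID endsD) /= addrC. Qed.

Lemma T_gt n s t r : (s < t)%N -> T n s t r = 0.
Proof.
move=> h; rewrite /T big_pred0 // => p; apply/negbTE; apply/negP => /ballot_le; lia.
Qed.

Lemma TD_gt n s t r : (s < t)%N -> TD n s t r = 0.
Proof.
move=> h; rewrite /TD big_pred0 // => p; apply/negbTE; apply/negP => /andP[/ballot_le]; lia.
Qed.

Lemma TU_gt n s t r : (s < t)%N -> TU n s t r = 0.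
Proof.
move=> h; rewrite /TU big_pred0 // => p; apply/negbTE; apply/negP => /andP[/ballot_le]; lia.
Qed.

Lemma Wt_nil r : Wt r [::] = (r == 0)%N%:R.
Proof. by rewrite /Wt /maj big_ord0 expr0 mul1r. Qed.

Lemma T0 s t r : T 0 s t r = if (s == 0)%N && (t == 0)%N then (r == 0)%N%:R else 0.
Proof.
rewrite /T /= big_cons big_nil addr0 Wt_nil ballotE /= andbT.
case: s => [|s]; case: t => [|t] //.
Qed.

Lemma TD0 s t r : TD 0 s t r = 0.
Proof. by rewrite /TD /= big_cons big_nil /= andbF. Qed.

Lemma TD_S n s t r :
  TD n.+1 s t r = if (0 < t)%N && (t <= s)%N then T n s t.-1 r else 0.
Proof.
rewrite /TD sum_allseqsS.
under eq_bigr => p _ do rewrite !endsD_rcons /= andbF andbT add0r ballot_rcons_false Wt_false.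
case: ifP => [/andP[-> ->]|h] /=; first by rewrite /T [RHS]big_mkcond.
by rewrite big1 // => p _; case: (0 < t)%N h => //=; case: (t <= s)%N.
Qed.

Lemma TU_S n s t r :
  TU n.+1 s t r = if (0 < s)%N then TU n s.-1 t r + qX ^+ n *
     (TD n s.-1 t r + (if s.-1 == t then wt n * TD n s.-1 t r.-1 else 0)) else 0.
Proof.
rewrite /TU sum_allseqsS.
under eq_bigr => p _ do rewrite !endsD_rcons /= andbF andbT addr0 ballot_rcons_true.
case: s => [|s] /=; first by rewrite big1.
rewrite -big_mkcond (bigID endsD) /= addrC; congr (_ + _).
  by apply: eq_bigr => p /andP[_ h]; rewrite Wt_true_noD.
rewrite big_seq_cond.
rewrite (eq_bigr (fun p => qX ^+ n * (if s == t then Wt r p + wt n * Wt r.-1 p else Wt r p))); last first.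
  move=> p /andP[hp /andP[hb hd]]; rewrite Wt_true_D //.
  have hs : size p = n by apply/eqP; rewrite -mem_allseqs.
  rewrite (ballot_height hb).
  have -> : (s%:Z - t%:Z == 0) = (s == t) by apply/eqP/eqP; lia.
  by rewrite hs.
rewrite -big_seq_cond -mulr_sumr; congr (_ * _).
case: (s == t); last by rewrite addr0.
by rewrite big_split /= -mulr_sumr.
Qed.

Definition cc (r : nat) : FF := qX ^+ 'C(r.+1, 2).

Lemma TU_eq n s t r : TU n s t r = T n s t r - TD n s t r.
Proof. by rewrite T_split addrK. Qed.

Lemma TD_eq n s t r : TD n s t r =
  if [&& (0 < n)%N, (0 < t)%N & (t <= s)%N] then T n.-1 s t.-1 r else 0.
Proof. by case: n => [|n]; rewrite ?TD0 ?TD_S. Qed.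

Lemma qbinom_diag n r : qbinom n (n + r) = (r == 0)%N%:R.
Proof.
case: r => [|r]; first by rewrite addn0 qbinom_nn.
by rewrite qbinom_gt //= addnS ltnS leq_addr.
Qed.


Lemma field_L0 (F : fieldType) (x B C : F) : x != 0 ->
  x * x * (1 * B + x^-1 * (1 * B)) + 1 * C = 1 * (C + x * (B + x * B)).
Proof. by move=> hx; field; exact: hx. Qed.

Lemma field_L1 (F : fieldType) (a b c A B C : F) : a * b != 0 ->
  (a * b) * (a * b) * (c * a * B + (a * b)^-1 * (c * A)) + c * a * C =
  c * a * (C + b * (A + (a * b) * a * B)).
Proof. by move=> hx; field; move: hx; rewrite mulf_eq0 negb_or andbC. Qed.

Lemma cc0 : cc 0 = 1. Proof. by rewrite /cc /= expr0. Qed.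
Lemma cc0' : cc 0.-1 = 1. Proof. exact: cc0. Qed.

Lemma ccS r : cc r.+1 = cc r * qX ^+ r.+1.
Proof. by rewrite /cc binS bin1 exprD. Qed.

Lemma G3 u r m : m = (u.+1 + u).+1 ->
  qX ^+ m * (cc r * qbinom m.-1 (u.+1 + r) + wt m * (cc r.-1 * qbinom m.-1 (u.+1 + r.-1))) +
  cc r * qbinom m (u.+2 + r) = cc r * qbinom m.+1 (u.+2 + r).
Proof.
move=> hm.
have hw : wt m = (qX ^+ u.+1)^-1 by rewrite /wt hm -addnS addnn doubleK.
have hq : qX ^+ m = qX ^+ u.+1 * qX ^+ u.+1 by rewrite hm -addnS exprD.
rewrite hw hq (addSn u.+1 r) pascal1 hm succnK.
case: r => [|r'].
  rewrite !cc0 !addn0.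
  have -> : ((u.+1 + u).+1 - u.+1 = u.+1)%N by lia.
  rewrite [qbinom (u.+1 + u).+1 u.+1]pascal2.
  rewrite [qbinom (u.+1 + u) u]qbinom_sym ?leq_addl // addnK.
  exact: (@field_L0 FF (qX ^+ u.+1) _ _ (expf_neq0 _ qX_neq0)).
case: (leqP r' u) => hr; last first.
  rewrite !qbinom_gt; try lia.
  by rewrite !(mulr0, addr0).
have e0 : r'.+1.-1 = r' := erefl.
rewrite e0 ccS !addnS.
have -> : ((u.+1 + u).+1 - (u.+1 + r').+1 = u - r')%N by lia.
rewrite [qbinom (u.+1 + u).+1 (u.+1 + r').+1]pascal2.
have -> : qX ^+ (u.+1 + r').+1 = qX ^+ u.+1 * qX ^+ r'.+1 by rewrite -addnS exprD.
have -> : qX ^+ u.+1 = qX ^+ r'.+1 * qX ^+ (u - r').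
  by rewrite -exprD; congr (_ ^+ _); lia.
apply: (@field_L1 FF (qX ^+ r'.+1) (qX ^+ (u - r')) (cc r')).
by apply: mulf_neq0; apply: expf_neq0; exact: qX_neq0.
Qed.

Lemma ring_G1 (R : comNzRingType) (A B C c x y : R) :
  (1 - x) * A = (1 - y) * B -> c * A - c * B + y * (c * B) + c * C = c * (C + x * A).
Proof.
move=> H; have E : x * A = A - (1 - x) * A by ring.
by rewrite E H; ring.
Qed.



Lemma G1' c m j : (0 < m)%N ->
  c * qbinom m j - c * qbinom m.-1 j + qX ^+ m * (c * qbinom m.-1 j) + c * qbinom m j.+1 =
  c * qbinom m.+1 j.+1.
Proof.
case: m => [|m] // _.
rewrite [qbinom m.+2 j.+1]pascal1.
have e0 : m.+1.-1 = m := erefl. rewrite e0.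
exact: (@ring_G1 FF _ _ _ c _ _ (absorb m j)).
Qed.

Lemma G2 r : (r == 0)%N%:R = cc r * qbinom 1 (1 + r).
Proof.
case: r => [|r]; first by rewrite cc0 addn0 qbinom_nn mulr1.
by rewrite qbinom_gt ?mulr0.
Qed.

Lemma G4 r : (r == 0)%N%:R = cc r * qbinom (0 + 0) (0 + r).
Proof.
case: r => [|r]; first by rewrite cc0 qbinom_nn mulr1.
by rewrite qbinom_gt ?mulr0.
Qed.

Definition Tf n s t r : FF :=
  if (t < s)%N then cc r * qbinom n (s + r) else if s == t then cc r * qbinom n.-1 (s + r) else 0.

Lemma Tform n : forall s t r, n = (s + t)%N -> T n s t r = Tf n s t r.
Proof.
elim/ltn_ind: n => n IH s t r hn.
have Tlt : forall k s t r, (k < n)%N -> (t < s)%N -> k = (s + t)%N -> T k s t r = cc r * qbinom k (s + r).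
  by move=> k s1 t1 r1 hk hl he; rewrite (IH k hk s1 t1 r1 he) /Tf hl.
have Teq : forall k s r, (k < n)%N -> k = (s + s)%N -> T k s s r = cc r * qbinom k.-1 (s + r).
  by move=> k s1 r1 hk he; rewrite (IH k hk s1 s1 r1 he) /Tf ltnn eqxx.
rewrite /Tf.
case: (ltngtP s t) => [hst|hts|est].
- by rewrite T_gt // ltnNge (ltnW hst) /= (ltn_eqF hst).
- case: s hts hn => [|s'] // hts hn.
  case: n hn IH Tlt Teq => [|m] hn IH Tlt Teq; first by lia.
  rewrite T_split TU_S TD_S /= (ltnW hts) andbT.
  case: (ltngtP s' t) => [h1|h2|h3].
  + lia.
  + rewrite addr0 TU_eq (Tlt m) //; last by lia.
    rewrite TD_eq.
    case: t h2 hts hn => [|t'] h2 hts hn /=.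
      rewrite andbF subr0 mulr0 !addr0.
      have -> : m = s' by lia.
      by rewrite !qbinom_diag.
    have hm : (0 < m)%N by lia.
    rewrite hm (ltnW h2) /= (Tlt m.-1) //; try lia.
    rewrite (Tlt m) //; try lia.
    rewrite addSn; exact: G1'.
  + subst t.
    rewrite TU_eq !TD_eq.
    case: s' hts hn => [|u] hts hn.
      have hm0 : m = 0%N by lia.
      subst m. rewrite /= T0 /= subr0 mulr0 add0r addr0 expr0 mul1r addr0.
      exact: G2.
    rewrite /= (Teq m) //; last by lia.
    have hm : (0 < m)%N by lia.
    rewrite hm /= (Tlt m.-1) //; try lia.
    rewrite (Tlt m.-1) //; try lia.
    rewrite (Tlt m) //; try lia.
    rewrite ltnSn subrr add0r.
    apply: G3; lia.
- subst t.

  case: s hn => [|s'] hn.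
    subst n; rewrite T0 /=.
    exact: G4.
  case: n hn IH Tlt Teq => [|m] hn IH Tlt Teq; first by lia.
  rewrite T_split TU_S TD_S /= TU_gt // TD_gt // TD_gt // mulr0 if_same addr0 mulr0 add0r.
  rewrite leqnn (Tlt m) //; last lia.
by rewrite add0r.
Qed.

Lemma setU1D1_eq (T : finType) (x : T) (M : {set T}) : ((x |: M) :\ x == M) = (x \notin M).
Proof.
case: (boolP (x \in M)) => h /=.
  apply/negbTE/eqP => E; have : x \in (x |: M) :\ x by rewrite E.
  by rewrite !inE eqxx.
by rewrite setU1K // eqxx.
Qed.

Lemma leq_predS r n : (r <= n.+1)%N = (r.-1 <= n)%N.
Proof. by case: r. Qed.

Lemma subset_esg (T : finType) (w : T -> FF) (l : seq T) (A : {set T}) r :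
  uniq l -> A =i l ->
  \sum_(M : {set T} | (M \subset A) && (r <= #|M|)%N) \prod_(i in M) w i = esg (map w l) r.
Proof.
elim: l A r => [|x l IH] A r /= hu hA.
  have -> : A = set0 by apply/setP => i; rewrite hA inE.
  case: r => [|r].
    rewrite (eq_bigl (fun M => M == set0)); last by move=> M; rewrite subset0 andbT.
    by rewrite big_pred1_eq big_set0.
  rewrite big_pred0 // => M; rewrite subset0; case: eqP => // ->.
  by rewrite cards0.
case/andP: hu => hx hu.
have hxA : x \in A by rewrite hA inE eqxx.
have hB : A :\ x =i l.
  move=> i; rewrite !inE hA inE; case: eqP => [->|] //=.
  by rewrite (negbTE hx).
rewrite (bigID (fun M : {set T} => x \in M)) /= addrC; congr (_ + _).
  rewrite -(IH (A :\ x) r hu hB); apply: eq_bigl => M.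
  by rewrite subsetD1 andbAC.
rewrite (reindex_onto (fun M => x |: M) (fun M => M :\ x)); last first.
  by move=> M /andP[_ h]; rewrite setD1K.
rewrite -(IH (A :\ x) r.-1 hu hB) mulr_sumr.
rewrite (eq_bigl (fun M : {set T} => (M \subset A :\ x) && (r.-1 <= #|M|)%N)); last first.
  move=> M; rewrite setU1D1_eq setU11 andbT subUset sub1set hxA /= subsetD1.
  case: (boolP (x \in M)) => hM /=; first by rewrite !(andbF, andFb).
  by rewrite !andbT cardsU1 hM /= add1n leq_predS.
apply: eq_bigr => M /andP[hM _].
rewrite big_setU1 //=.
by move: hM; rewrite subsetD1 => /andP[_].
Qed.

Lemma vmr_prod n (p : n.-tuple bool) (M : {set 'I_n}) :
  qX ^ vmr p M = qX ^+ maj p * \prod_(i in M) wt i.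
Proof.
rewrite /vmr expfzDr; last exact: qX_neq0.
by rewrite -exprnP -exprnN -prodrXr -prodfV.
Qed.

Lemma inner_eq n (p : n.-tuple bool) r :
  \sum_(M : {set 'I_n} | (M \subset returns p) && (r <= #|M|)%N) qX ^ vmr p M = Wt r p.
Proof.
under eq_bigr => M _ do rewrite vmr_prod.
rewrite -mulr_sumr (@subset_esg _ (fun i : 'I_n => wt i) [seq i : 'I_n <- enum 'I_n | is_return p i]).
- rewrite /Wt /rets size_tuple; congr (_ * esg _ r).
  rewrite -val_enum_ord filter_map -map_comp; apply: eq_map => i //.
- exact: filter_uniq (enum_uniq _).
- by move=> i; rewrite /returns inE mem_filter mem_enum andbT.
Qed.

Lemma perm_allseqs n : perm_eq (allseqs n) [seq val t | t <- index_enum (n.-tuple bool)].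
Proof.
apply: uniq_perm.
- exact: uniq_allseqs.
- by rewrite map_inj_uniq ?index_enum_uniq //; exact: val_inj.
- move=> x; rewrite mem_allseqs; apply/idP/mapP => [h|[t _ ->]]; last by rewrite size_tuple.
  by exists (Tuple h); rewrite ?mem_index_enum.
Qed.

Lemma tuple_sum n (P : pred (seq bool)) (F : seq bool -> FF) :
  \sum_(p : n.-tuple bool | P p) F p = \sum_(p <- allseqs n | P p) F p.
Proof. by rewrite (perm_big _ (perm_allseqs n)) big_map. Qed.

Theorem lemma2p3 (s r : nat) : (0 < s)%N ->
  \sum_(p : (2 * s).-tuple bool | ballot s s p)
     \sum_(M : {set 'I_(2 * s)} | (M \subset returns p) && (r <= #|M|)%N)
        qX ^ vmr p M
  = qX ^+ 'C(r.+1, 2) * qbinom (2 * s - 1) (s + r).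
Proof.
move=> hs.
under eq_bigr => p _ do rewrite inner_eq.
rewrite (tuple_sum _ (fun p => ballot s s p) (Wt r)).
rewrite -/(T (2 * s) s s r) (@Tform (2 * s) s s r); last by rewrite mul2n addnn.
by rewrite /Tf ltnn eqxx subn1.
Qed.
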